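(* Let $T_r$ be a resistive dyadic tree with resistances $(r_n^k)$ and let $s>0$ be such that $$\sum_{n\geq 1}\frac{\max_{0\le k\le 2^n-1} r_n^k}{2^{n(1-2s)}}<+\infty .$$ Then (this condition implies $\sum_{n\ge1}2^{-n}\max_k r_n^k<\infty$, so that for every $p\in H^1(T_r)$ the sequence $\tilde p_n$ converges in $L^2(\mathbb{Z}_2)$ to a limit $\gamma_0(p)$) the trace operator $\gamma_0$ maps $H^1(T_r)$ continuously into $H^s(\mathbb{Z}_2)$: $\gamma_0(p)\in H^s(\mathbb{Z}_2)$ for all $p\in H^1(T_r)$ and $\|\gamma_0(p)\|_{H^s(\mathbb{Z}_2)}\le C\|p\|_{H^1(T_r)}$ with $C$ independent of $p$.
   Context: The infinite dyadic tree $T$ has vertex set $V$ equal to the disjoint union over $n\ge 0$ of the sets $\mathbb{Z}/2^n\mathbb{Z}$; $x_n^k$ denotes $k\in\mathbb{Z}/2^n\mathbb{Z}$, and $x_0^0$ is the root. For $n<m$, $\varphi_n^m:\mathbb{Z}/2^m\mathbb{Z}\to\mathbb{Z}/2^n\mathbb{Z}$ is the canonical surjection. For $n\ge1$ the edge $e_n^k$ joins $x_n^k$ to $\varphi_{n-1}^n(x_n^k)$. A resistive dyadic tree $T_r$ is $T$ with positive resistances $r_n^k$ on $e_n^k$ ($n\ge1$, $0\le k\le2^n-1$). $|p|_{H^1}^2=\sum_{n\ge1}\sum_k |p(x_n^k)-p(\varphi_{n-1}^n(x_n^k))|^2/r_n^k$, $H^1(T_r)=\{p:V\to\mathbb{R}:|p|_{H^1}<\infty\}$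 with norm $\|p\|_{H^1(T_r)}^2=|p(x_0^0)|^2+|p|_{H^1}^2$. $\mathbb{Z}_2$: 2-adic integers, $|\cdot|_2$ the 2-adic absolute value, $\mu$ the Haar probability measure on $\mathbb{Z}_2$. For $n\ge0$, $\tilde p_n(x)=p(x_n^a)$ where $a\in\{0,\dots,2^n-1\}$, $x\in a+2^n\mathbb{Z}_2$. Sobolev spaces: $\Lambda=\mathbb{Q}_2/\mathbb{Z}_2$ (identified with $\mathbb{Z}[1/2]\cap[0,1)$); for $f\in L^2(\mathbb{Z}_2)$ and $\lambda\in\Lambda$, $\mathcal F(f)(\lambda)=\int_{\mathbb{Z}_2}e^{-2i\pi\lambda x}f(x)\,d\mu(x)$; $H^s(\mathbb{Z}_2)$ is the completion of the space of locally constant functions on $\mathbb{Z}_2$ for the norm $\|f\|_{H^s(\mathbb{Z}_2)}=\big(\sum_{\lambda\in\Lambda}(1+|\lambda|_2)^{2s}|\mathcal F(f)(\lambda)|^2\big)^{1/2}$. *)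

(* Defs.v *)
From HB Require Import structures.
From mathcomp Require Import all_boot all_order all_algebra.
From mathcomp Require Import all_classical all_reals all_analysis.
Set Implicit Arguments. Unset Strict Implicit. Unset Printing Implicit Defensive.
Import Order.TTheory GRing.Theory Num.Theory numFieldTopology.Exports numFieldNormedType.Exports.
Local Open Scope ring_scope.

Section Dyadic.
Variable R : realType.

(* A vertex x_n^k of the dyadic tree is the pair (n, k) with k < 2^n.
   Resistances r : nat -> nat -> R (r n k on the edge e_n^k, n >= 1) and
   potentials p : nat -> nat -> R (p n k = p(x_n^k)); values at k >= 2^n
   are irrelevant and never used.  The parent of x_n^k is
   x_{n-1}^{k mod 2^(n-1)} (canonical surjection Z/2^n -> Z/2^(n-1)). *)

Definition edge_energy (r p : nat -> nat -> R) (n : nat) : R :=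
  \sum_(k < 2 ^ n) (p n k - p n.-1 (k %% 2 ^ n.-1)%N) ^+ 2 / r n k.

Definition H1semi2 (r p : nat -> nat -> R) : \bar R :=
  (\sum_(1 <= n <oo) (edge_energy r p n)%:E)%E.

Definition H1norm2 (r p : nat -> nat -> R) : \bar R :=
  ((p 0%N 0%N ^+ 2)%:E + H1semi2 r p)%E.

Definition maxres (r : nat -> nat -> R) (n : nat) : R :=
  \big[Num.max/0]_(k < 2 ^ n) r n k.

(* Integral w.r.t. the Haar probability measure mu on Z_2 of a function
   constant on each coset b + 2^L Z_2 (b < 2^L), with value h b there:
   each such coset has measure 2^-L. *)
Definition step_integral (L : nat) (h : nat -> R) : R :=
  ((2 ^ L)%:R)^-1 * \sum_(b < 2 ^ L) h b.

(* \tilde p_n is the locally constant function with value p n a on a + 2^n Z_2.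
   Squared L^2(Z_2)-distance between \tilde p_n and \tilde p_m
   (both constant on cosets of 2^(max n m) Z_2). *)
Definition L2dist2 (p : nat -> nat -> R) (n m : nat) : R :=
  step_integral (maxn n m)
    (fun b => (p n (b %% 2 ^ n)%N - p m (b %% 2 ^ m)%N) ^+ 2).

(* (\tilde p_n) is a Cauchy (hence convergent, L^2 being complete) sequence in L^2(Z_2). *)
Definition L2_cauchy (p : nat -> nat -> R) : Prop :=
  forall e : R, 0 < e -> exists N : nat, forall n m : nat,
    (N <= n)%N -> (N <= m)%N -> L2dist2 p n m < e.

(* Lambda = Q_2/Z_2 = Z[1/2] /\ [0,1): each lambda is uniquely j / 2^m with
   (m, j) = (0, 0) (lambda = 0) or m >= 1, j odd, j < 2^m. *)
Definition lam_index (m j : nat) : bool :=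
  ((m == 0%N) && (j == 0%N)) || [&& (0 < m)%N, odd j & (j < 2 ^ m)%N].

Definition lam_val (m j : nat) : R := j%:R / (2 ^ m)%:R.

(* 2-adic absolute value of lambda = j/2^m in canonical form. *)
Definition lam_abs2 (m : nat) : R := if m == 0%N then 0 else (2 ^ m)%:R.

(* Real and imaginary parts of F(g)(lambda) = \int e^{-2 i pi lambda x} g(x) dmu(x)
   for g locally constant at level n (value g a on a + 2^n Z_2), lambda = j/2^m.
   The integrand is constant on cosets b + 2^(max n m) Z_2, with value
   g (b mod 2^n) * e^{-2 i pi j b / 2^m}. *)
Definition fourier_re (n : nat) (g : nat -> R) (m j : nat) : R :=
  step_integral (maxn n m)
    (fun b => g (b %% 2 ^ n)%N * cos (2 * pi * lam_val m j * b%:R)).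

Definition fourier_im (n : nat) (g : nat -> R) (m j : nat) : R :=
  step_integral (maxn n m)
    (fun b => - (g (b %% 2 ^ n)%N * sin (2 * pi * lam_val m j * b%:R))).

(* Fourier coefficients of gamma_0(p) = L^2-lim \tilde p_n (the Fourier transform
   is L^2-continuous, so F(gamma_0 p)(lambda) = lim_n F(\tilde p_n)(lambda)). *)
Definition gamma0_re (p : nat -> nat -> R) (m j : nat) : R :=
  limn (fun n => fourier_re n (p n) m j).

Definition gamma0_im (p : nat -> nat -> R) (m j : nat) : R :=
  limn (fun n => fourier_im n (p n) m j).

(* ||f||_{H^s(Z_2)}^2 = sum_{lambda in Lambda} (1 + |lambda|_2)^{2s} |F f(lambda)|^2,
   for f given by its Fourier coefficients (fre, fim). *)
Definition Hs_norm2 (s : R) (fre fim : nat -> nat -> R) : \bar R :=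
  (\sum_(0 <= m <oo)
     (\sum_(j < 2 ^ m | lam_index m j)
        (1 + lam_abs2 m) `^ (2 * s) * (fre m j ^+ 2 + fim m j ^+ 2))%:E)%E.

End Dyadic.

(* Main.v *)
Require Import Defs.
From HB Require Import structures.
From mathcomp Require Import all_boot all_order all_algebra.
From mathcomp Require Import all_classical all_reals all_analysis.
Import Order.TTheory GRing.Theory Num.Theory numFieldTopology.Exports numFieldNormedType.Exports.
From mathcomp Require Import ring lra zify.
Set Implicit Arguments. Unset Strict Implicit.
Local Open Scope ring_scope.

Section A.
Variable R : realType.
Implicit Types (h g f : nat -> R).

Lemma sum_mul_period (K c : nat) (f : nat -> R) :
  (forall b, f (b %% 2 ^ K)%N = f b) ->
  \sum_(b < 2 ^ K * c) f b = c%:R * \sum_(b < 2 ^ K) f b.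
Proof.
move=> fP; elim: c => [|c IH]; first by rewrite muln0 big_ord0 mul0r.
have E n (F : nat -> R) : \sum_(b < n) F b = \sum_(0 <= b < n) F b :> R by rewrite big_mkord.
rewrite E mulnS addnC.
rewrite (big_cat_nat _ (n:=(2 ^ K * c)%N)) //=; last by rewrite leq_addr.
rewrite -E IH -{1}(add0n (2 ^ K * c)%N) big_addn.
rewrite addKn -E.
have -> : \sum_(i < 2 ^ K) f (i + 2 ^ K * c)%N = \sum_(i < 2 ^ K) f i.
  apply: eq_bigr => i _; rewrite -fP -[in RHS]fP; congr f.
  by rewrite addnC mulnC modnMDl.
by rewrite mulrSr mulrDl mul1r.
Qed.

Lemma step_integral_lift (K L : nat) (f : nat -> R) :
  (K <= L)%N -> (forall b, f (b %% 2 ^ K)%N = f b) ->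
  step_integral L f = step_integral K f.
Proof.
move=> KL fP; rewrite /step_integral -(subnKC KL) expnD sum_mul_period //.
rewrite natrM invfM -mulrA; congr (_ * _).
rewrite mulrA mulVf ?mul1r // pnatr_eq0 expn_eq0 //.
Qed.

Lemma step_integralD L f g :
  step_integral L (fun b => f b + g b) = step_integral L f + step_integral L g.
Proof. by rewrite /step_integral big_split mulrDr. Qed.

Lemma step_integralZ L a f :
  step_integral L (fun b => a * f b) = a * step_integral L f.
Proof. by rewrite /step_integral -mulr_sumr mulrCA. Qed.

Lemma step_integralN L f :
  step_integral L (fun b => - f b) = - step_integral L f.
Proof. by rewrite /step_integral sumrN mulrN. Qed.

Lemma step_integral_sum L (n : nat) (F : nat -> nat -> R) :
  step_integral L (fun b => \sum_(i < n) F i b) = \sum_(i < n) step_integral L (F i).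
Proof.
rewrite /step_integral exchange_big /= mulr_sumr //.
Qed.

Lemma step_integral_le L f g : (forall b, f b <= g b) ->
  step_integral L f <= step_integral L g.
Proof.
move=> fg; rewrite /step_integral ler_wpM2l ?invr_ge0 ?ler0n //.
by apply: ler_sum => b _.
Qed.

Lemma step_integral_ge0 L f : (forall b, 0 <= f b) -> 0 <= step_integral L f.
Proof.
move=> f0; rewrite /step_integral mulr_ge0 ?invr_ge0 ?ler0n //.
by apply: sumr_ge0.
Qed.

End A.

Section B.
Variable R : realType.

Lemma cos_shift (x : R) n : cos (x + (pi *+ 2) *+ n) = cos x.
Proof. exact: (periodicn (@cosD2pi R)). Qed.
Lemma sin_shift (x : R) n : sin (x + (pi *+ 2) *+ n) = sin x.
Proof. exact: (periodicn (@sinD2pi R)). Qed.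

Lemma sum_cos_zero (N t : nat) : (0 < t)%N -> (t < N)%N ->
  \sum_(j < N) cos (2 * pi * (j%:R / N%:R) * t%:R) = 0 :> R.
Proof.
move=> t0 tN.
have N0 : (0 < N)%N by apply: leq_trans tN.
have NR : (N%:R : R) != 0 by rewrite pnatr_eq0 -lt0n.
set a : R := pi * t%:R / N%:R.
have pi0 : 0 < (pi : R) := pi_gt0 R.
have a0 : 0 < a by rewrite /a; apply: divr_gt0; [apply: mulr_gt0|]; rewrite // ltr0n.
have api : a < pi.
  rewrite /a -mulrA gtr_pMr // ltr_pdivrMr ?ltr0n // mul1r ltr_nat //.
have sa : 0 < sin a by apply: sin_gt0_pi; apply/andP.
pose u (j : nat) := sin ((j%:R *+ 2 - 1) * a).
have key j : cos (2 * pi * (j%:R / N%:R) * t%:R) * (sin a *+ 2) = u j.+1 - u j.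
  have -> : 2 * pi * (j%:R / N%:R) * t%:R = j%:R *+ 2 * a.
    by rewrite /a; field.
  rewrite /u.
  have -> : ((j.+1)%:R *+ 2 - 1) * a = j%:R *+ 2 * a + a.
    by rewrite -natr1; ring.
  have -> : ((j)%:R *+ 2 - 1) * a = j%:R *+ 2 * a - a by ring.
  rewrite sinD sinB; ring.
have : (\sum_(j < N) cos (2 * pi * (j%:R / N%:R) * t%:R)) * (sin a *+ 2) = 0.
  rewrite mulr_suml (eq_bigr _ (fun (j : 'I_N) _ => key j)).
  rewrite -(big_mkord xpredT (fun j => u j.+1 - u j)) telescope_sumr //.
  rewrite /u.
  have -> : (N%:R *+ 2 - 1) * a = - a + (pi *+ 2) *+ t.
    rewrite /a -mulr_natr -[pi *+ 2]mulr_natr -mulr_natr; field.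
  exact: NR.
by rewrite sin_shift mul0rn sub0r mulN1r subrr.
move/eqP; rewrite mulf_eq0 => /orP[/eqP //|].
by rewrite mulrn_eq0 /= (gt_eqF sa).
Qed.


Lemma sum_cos_diff (N b b' : nat) : (b < N)%N -> (b' < N)%N ->
  \sum_(j < N) cos (2 * pi * (j%:R / N%:R) * b%:R - 2 * pi * (j%:R / N%:R) * b'%:R)
  = (b == b')%:R * N%:R :> R.
Proof.
move=> bN b'N.
case: (ltngtP b b') => [lt|lt|<-].
- rewrite (eq_bigr (fun j : 'I_N => cos (2 * pi * (j%:R / N%:R) * (b' - b)%:R))).
    by rewrite sum_cos_zero ?(ltn_eqF lt) ?mul0r //; lia.
  move=> j _; rewrite -cosN natrB ?(ltnW lt) //; congr cos; ring.
- rewrite (eq_bigr (fun j : 'I_N => cos (2 * pi * (j%:R / N%:R) * (b - b')%:R))).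
    by rewrite sum_cos_zero ?(gtn_eqF lt) ?mul0r //; lia.
  move=> j _; rewrite natrB ?(ltnW lt) //; congr cos; ring.
- rewrite mul1r (eq_bigr (fun _ => 1)); last by move=> j _; rewrite subrr cos0.
  by rewrite sumr_const card_ord.
Qed.

Definition FR L (h : nat -> R) m j :=
  step_integral L (fun b => h b * cos (2 * pi * lam_val R m j * b%:R)).
Definition FI L (h : nat -> R) m j :=
  step_integral L (fun b => - (h b * sin (2 * pi * lam_val R m j * b%:R))).

Lemma parseval_top L (h : nat -> R) :
  \sum_(j < 2 ^ L) (FR L h L j ^+ 2 + FI L h L j ^+ 2) =
  step_integral L (fun b => h b ^+ 2).
Proof.
set N := (2 ^ L)%N.
have NR : (N%:R : R) != 0 by rewrite pnatr_eq0 expn_eq0.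
have E j : FR L h L j ^+ 2 + FI L h L j ^+ 2 =
    N%:R^-1 ^+ 2 * \sum_(b < N) \sum_(b' < N) h b * h b' *
      cos (2 * pi * (j%:R / N%:R) * b%:R - 2 * pi * (j%:R / N%:R) * b'%:R).
  rewrite /FR /FI /step_integral /lam_val -/N sumrN mulrN sqrrN !exprMn -mulrDr.
  congr (_ * _); rewrite !expr2 !big_distrlr /= -big_split /=.
  apply: eq_bigr => b _; rewrite -big_split /=; apply: eq_bigr => b' _.
  rewrite cosB; ring.
rewrite (eq_bigr _ (fun (j : 'I_N) _ => E j)) -mulr_sumr.
rewrite exchange_big /=.
rewrite (eq_bigr (fun b : 'I_N => h b ^+ 2 * N%:R)); last first.
  move=> b _; rewrite exchange_big /=.
  rewrite (eq_bigr (fun b' : 'I_N => h b * h b' * ((b == b')%:R * N%:R))); last first.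
    by move=> b' _; rewrite -mulr_sumr sum_cos_diff.
  rewrite (bigD1 b) //= eqxx big1 ?addr0; first by rewrite mul1r expr2.
  by move=> b' /negbTE; rewrite eq_sym => ->; rewrite mul0r mulr0.
rewrite /step_integral -/N -mulr_suml; by field.
Qed.

End B.

Section D.
Variable R : realType.

Lemma sum_odd (N : nat) (F : nat -> R) :
  \sum_(j < N.*2 | odd j) F j = \sum_(i < N) F (i.*2.+1).
Proof.
elim: N => [|N IH]; first by rewrite !big_ord0.
rewrite big_mkcond /= doubleS !big_ord_recr /= -big_mkcond /= IH.
by rewrite odd_double /= addr0.
Qed.

Lemma sum_all2 (N : nat) (F : nat -> R) :
  \sum_(j < N.*2) F j = \sum_(i < N) (F (i.*2) + F (i.*2.+1)).
Proof.
elim: N => [|N IH]; first by rewrite !big_ord0.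
by rewrite doubleS !big_ord_recr /= IH addrA.
Qed.

Lemma reindex L (Y : nat -> R) :
  \sum_(m < L.+1) \sum_(j < 2 ^ m | lam_index m j) Y (j * 2 ^ (L - m))%N
  = \sum_(j < 2 ^ L) Y j.
Proof.
elim: L Y => [|L IH] Y.
  rewrite big_ord1 big_mkcond expn0 !big_ord1.
  by rewrite muln1.
rewrite big_ord_recr /=.
rewrite (eq_bigr (fun m : 'I_L.+1 =>
   \sum_(j < 2 ^ m | lam_index m j) (fun i => Y (i.*2)) (j * 2 ^ (L - m))%N)); last first.
  move=> m _; apply: eq_bigr => j _; congr Y.
  rewrite subSn; last by rewrite -ltnS.
  by rewrite expnS mulnCA mul2n.
rewrite (IH (fun i => Y i.*2)) subnn expn0.
rewrite (eq_bigl (fun j : 'I_(2 ^ L.+1) => odd j)); last first.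
  by move=> j; rewrite /lam_index /= ltn_ord andbT.
rewrite (eq_bigr (fun j : 'I_(2 ^ L.+1) => Y j)); last by move=> j _; rewrite muln1.
rewrite expnS mul2n sum_odd sum_all2 -big_split //.
Qed.

Lemma lam_val_up L m j : (m <= L)%N ->
  lam_val R m j = lam_val R L (j * 2 ^ (L - m))%N.
Proof.
move=> mL; rewrite /lam_val -{2}(subnK mL) expnD !natrM.
have h1 : ((2 ^ m)%:R : R) != 0 by rewrite pnatr_eq0 expn_eq0.
have h2 : ((2 ^ (L - m))%:R : R) != 0 by rewrite pnatr_eq0 expn_eq0.
by field; rewrite h1 h2.
Qed.

Lemma parseval L (h : nat -> R) :
  \sum_(m < L.+1) \sum_(j < 2 ^ m | lam_index m j) (FR L h m j ^+ 2 + FI L h m j ^+ 2)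
  = step_integral L (fun b => h b ^+ 2).
Proof.
rewrite -parseval_top -(reindex L (fun j => FR L h L j ^+ 2 + FI L h L j ^+ 2)).
apply: eq_bigr => m _; apply: eq_bigr => j _.
by rewrite /FR /FI -lam_val_up // -ltnS.
Qed.

End D.

Section E.
Variable R : realType.

Lemma lam_arg_mod m K j b : (m <= K)%N ->
  2 * pi * lam_val R m j * b%:R =
  2 * pi * lam_val R m j * (b %% 2 ^ K)%:R + (pi *+ 2) *+ (j * 2 ^ (K - m) * (b %/ 2 ^ K))%N.
Proof.
move=> mK; set q := (b %/ 2 ^ K)%N; set s := (b %% 2 ^ K)%N.
rewrite {1}(divn_eq b (2 ^ K)) -/q -/s.
have h1 : ((2 ^ m)%:R : R) != 0 by rewrite pnatr_eq0 expn_eq0.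
have E : ((2 ^ K)%:R : R) = (2 ^ (K - m))%:R * (2 ^ m)%:R by rewrite -natrM -expnD subnK.
rewrite natrD natrM E /lam_val -[_ *+ (j * _ * q)%N]mulr_natr -[pi *+ 2]mulr_natr !natrM.
by field.
Qed.

Lemma cos_mod m K j b : (m <= K)%N ->
  cos (2 * pi * lam_val R m j * (b %% 2 ^ K)%:R) = cos (2 * pi * lam_val R m j * b%:R).
Proof. by move=> mK; rewrite (lam_arg_mod _ b mK) cos_shift. Qed.

Lemma sin_mod m K j b : (m <= K)%N ->
  sin (2 * pi * lam_val R m j * (b %% 2 ^ K)%:R) = sin (2 * pi * lam_val R m j * b%:R).
Proof. by move=> mK; rewrite (lam_arg_mod _ b mK) sin_shift. Qed.

Definition periodic2 K (h : nat -> R) := forall b, h (b %% 2 ^ K)%N = h b.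

Lemma periodic2_up K K' h : (K <= K')%N -> periodic2 K h -> periodic2 K' h.
Proof.
move=> KK hP b; rewrite -hP -[RHS]hP; congr h.
by rewrite modn_dvdm // dvdn_exp2l.
Qed.

Lemma FR_lift K L h m j : (m <= K)%N -> (K <= L)%N -> periodic2 K h ->
  FR L h m j = FR K h m j /\ FI L h m j = FI K h m j.
Proof.
move=> mK KL hP; split; apply: step_integral_lift => // b.
  by rewrite hP cos_mod.
by rewrite hP sin_mod.
Qed.

Lemma sq_add_eq0 (x y : R) : x ^+ 2 + y ^+ 2 = 0 -> x = 0 /\ y = 0.
Proof.
move/eqP; rewrite paddr_eq0 ?sqr_ge0 // !sqrf_eq0 => /andP[/eqP -> /eqP ->].
by [].
Qed.

Lemma vanish k L h m j : periodic2 k h -> (k < m)%N -> (m <= L)%N ->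
  lam_index m j -> FR L h m j = 0 /\ FI L h m j = 0.
Proof.
move=> hP km mL lj.
pose S m := \sum_(j < 2 ^ m | lam_index m j) (FR L h m j ^+ 2 + FI L h m j ^+ 2).
have S0 m' : 0 <= S m' by apply: sumr_ge0 => i _; rewrite addr_ge0 ?sqr_ge0.
have kL : (k <= L)%N by apply: leq_trans (ltnW km) mL.
have e1 := parseval L h.
have e2 := parseval k h.
rewrite (step_integral_lift (K := k)) // in e1; last first.
  by move=> b; rewrite hP.
have e3 : \sum_(m' < k.+1) S m' = step_integral k (fun b => h b ^+ 2).
  rewrite -e2; apply: eq_bigr => m' _; apply: eq_bigr => j' _.
  by have [-> ->] := FR_lift j' (ltnSE (ltn_ord m')) kL hP.
have : \sum_(k.+1 <= m' < L.+1) S m' = 0.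
  have := e1; rewrite -e3 -!(big_mkord xpredT S) (big_cat_nat _ (n := k.+1)) //=.
  by move=> H; apply: (addrI (\sum_(0 <= i < k.+1) S i)); rewrite H addr0.
move/eqP; rewrite psumr_eq0; last by move=> *; apply: S0.
move/allP => /(_ m); rewrite mem_index_iota km ltnS mL => /(_ isT) /implyP /(_ isT) /eqP.
have mpos : (0 < m)%N by apply: leq_ltn_trans km.
have jm : (j < 2 ^ m)%N by move: lj; rewrite /lam_index (gtn_eqF mpos) /= => /and3P[].
move=> /eqP; rewrite /S psumr_eq0; last by move=> i _; rewrite addr_ge0 ?sqr_ge0.
move/allP => /(_ (Ordinal jm)) /(_ (mem_index_enum _)) /implyP /(_ lj) /eqP.
exact: sq_add_eq0.
Qed.

End E.

Section SF.
Variable R : realType.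

Lemma wCS (n : nat) (x c : nat -> R) : (forall i, 0 < c i) ->
  (\sum_(i < n) x i) ^+ 2 <= (\sum_(i < n) c i) * (\sum_(i < n) x i ^+ 2 / c i).
Proof.
move=> c0; elim: n => [|n IH]; first by rewrite !big_ord0 expr0n mul0r.
rewrite !big_ord_recr /=.
set S := \sum_(i < n) x i in IH *; set A := \sum_(i < n) c i in IH *.
set B := \sum_(i < n) x i ^+ 2 / c i in IH *.
have A0 : 0 <= A by apply: sumr_ge0 => i _; apply: ltW.
have B0 : 0 <= B by apply: sumr_ge0 => i _; rewrite divr_ge0 ?sqr_ge0 ?ltW.
have cn := c0 n.
set y := x n / c n.
have xy : x n = c n * y by rewrite /y mulrCA divff ?mulr1 ?gt_eqF.
rewrite xy.
have -> : (c n * y) ^+ 2 / c n = c n * y ^+ 2 by field; rewrite gt_eqF.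
have key : 2 * S * y <= A * y ^+ 2 + B.
  have [A0'|Ap] := eqVneq A 0.
    have S0 : S = 0.
      by rewrite A0' mul0r in IH; apply/eqP; rewrite -sqrf_eq0 eq_le IH sqr_ge0.
    rewrite S0 A0'; nra.
  have Apos : 0 < A by rewrite lt_def Ap A0.
  rewrite -(ler_pM2l Apos); have := sqr_ge0 (A * y - S); nra.
nra.
Qed.

Variables (r p : nat -> nat -> R).
Hypothesis hr : forall n k : nat, (1 <= n)%N -> (k < 2 ^ n)%N -> 0 < r n k.

Definition P n b := p n (b %% 2 ^ n)%N.
Definition Dp i b := p i (b %% 2 ^ i)%N - (if i is i'.+1 then p i' (b %% 2 ^ i')%N else 0).
Definition Mx i := if i is 0 then 1 else maxres r i.
Definition Ep i := if i is 0 then p 0 0 ^+ 2 else edge_energy r p i.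

Lemma P_per n : periodic2 n (P n).
Proof. by move=> b; rewrite /P modn_mod. Qed.

Lemma Dp_per i : periodic2 i (Dp i).
Proof.
move=> b; rewrite /Dp modn_mod; case: i => [|i] //=.
by rewrite (modn_dvdm _ (dvdn_exp2l _ (leqnSn i))).
Qed.

Lemma P_sum n b : P n b = \sum_(i < n.+1) Dp i b.
Proof.
elim: n => [|n IH]; first by rewrite big_ord1 /Dp /P subr0.
by rewrite big_ord_recr /= -IH /Dp /P addrC subrK.
Qed.

Lemma fourier_FR n m j L : (maxn n m <= L)%N ->
  fourier_re n (p n) m j = FR L (P n) m j /\ fourier_im n (p n) m j = FI L (P n) m j.
Proof.
move=> nmL.
have [e1 e2] := FR_lift j (leq_maxr n m) nmL (periodic2_up (leq_maxl n m) (P_per n)).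
by rewrite e1 e2.
Qed.

Lemma FR_sum L n (F : nat -> nat -> R) m j :
  FR L (fun b => \sum_(i < n) F i b) m j = \sum_(i < n) FR L (F i) m j /\
  FI L (fun b => \sum_(i < n) F i b) m j = \sum_(i < n) FI L (F i) m j.
Proof.
split.
  rewrite /FR (_ : (fun b => (\sum_(i < n) F i b) * cos (2 * pi * lam_val R m j * b%:R)) =
     (fun b => \sum_(i < n) (F i b * cos (2 * pi * lam_val R m j * b%:R)))).
    by rewrite (step_integral_sum L n (fun i b => F i b * cos (2 * pi * lam_val R m j * b%:R))).
  by apply: funext => b; rewrite mulr_suml.
rewrite /FI (_ : (fun b => - ((\sum_(i < n) F i b) * sin (2 * pi * lam_val R m j * b%:R))) =
   (fun b => \sum_(i < n) - (F i b * sin (2 * pi * lam_val R m j * b%:R)))).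
  by rewrite (step_integral_sum L n (fun i b => - (F i b * sin (2 * pi * lam_val R m j * b%:R)))).
by apply: funext => b; rewrite mulr_suml sumrN.
Qed.

Lemma Mx_gt0 i : 0 < Mx i.
Proof.
case: i => [|i] //=; rewrite /maxres.
have h0 : (0 < 2 ^ i.+1)%N by rewrite expn_gt0.
apply: (lt_le_trans (hr (n := i.+1) (k := 0) _ h0)) => //.
exact: (le_bigmax _ (fun k : 'I_(2 ^ i.+1) => r i.+1 k) (Ordinal h0)).
Qed.

Lemma Ep_ge0 i : 0 <= Ep i.
Proof.
case: i => [|i] /=; first exact: sqr_ge0.
rewrite /edge_energy; apply: sumr_ge0 => k _; rewrite divr_ge0 ?sqr_ge0 //.
by apply: ltW; apply: hr.
Qed.

Lemma energy_bound i :
  step_integral i (fun b => Dp i b ^+ 2) <= (2 ^ i)%:R^-1 * Mx i * Ep i.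
Proof.
case: i => [|i].
  by rewrite /step_integral /Dp /Mx /Ep !big_ord1 /= expn0 invr1 !mul1r subr0.
rewrite /step_integral /Mx /Ep /edge_energy -mulrA ler_wpM2l ?invr_ge0 ?ler0n //.
rewrite mulr_sumr; apply: ler_sum => b _.
rewrite /Dp modn_small //=.
have rb : 0 < r i.+1 b by apply: hr.
have rM : r i.+1 b <= maxres r i.+1.
  exact: (le_bigmax _ (fun k : 'I_(2 ^ i.+1) => r i.+1 k) b).
set d := (_ - _) ^+ 2.
have d0 : 0 <= d by apply: sqr_ge0.
rewrite mulrC; apply: (le_trans (y := d / r i.+1 b * r i.+1 b)).
  by rewrite divfK ?gt_eqF.
by rewrite ler_wpM2l // divr_ge0 // ltW.
Qed.


Definition W (s : R) m := (1 + lam_abs2 R m) `^ (2 * s).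
Definition cc s i := W s i * (2 ^ i)%:R^-1 * Mx i.

Lemma lam_abs2_ge0 m : 0 <= lam_abs2 R m.
Proof. by rewrite /lam_abs2; case: eqP. Qed.

Lemma W_mono s m i : 0 <= s -> (m <= i)%N -> W s m <= W s i.
Proof.
move=> s0 mi; rewrite /W; apply: ge0_ler_powR; rewrite ?mulr_ge0 //.
- by rewrite nnegrE addr_ge0 ?lam_abs2_ge0.
- by rewrite nnegrE addr_ge0 ?lam_abs2_ge0.
rewrite lerD2l /lam_abs2; case: eqP => [_|/eqP m0]; first by case: eqP.
have i0 : i != 0%N by apply: contra m0 => /eqP i0; move: mi; rewrite i0 leqn0.
by rewrite (negbTE i0) ler_nat leq_exp2l.
Qed.

Lemma W_ge1 s m : 0 <= s -> 1 <= W s m.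
Proof.
move=> s0; apply: (le_trans _ (W_mono (s:=s) (m:=0) (i:=m) s0 (leq0n m))).
by rewrite /W /lam_abs2 /= addr0 powR1.
Qed.

Lemma cc_gt0 s i : 0 <= s -> 0 < cc s i.
Proof.
move=> s0; rewrite /cc mulr_gt0 ?Mx_gt0 // mulr_gt0 ?invr_gt0 ?ltr0n ?expn_gt0 //.
exact: (lt_le_trans ltr01 (W_ge1 (s:=s) i s0)).
Qed.

Lemma sum_ord_le (f : nat -> R) K K' : (forall m, 0 <= f m) -> (K <= K')%N ->
  \sum_(m < K) f m <= \sum_(m < K') f m.
Proof.
move=> f0 KK; rewrite -!(big_mkord xpredT f) [X in _ <= X](big_cat_nat _ (n := K)) //=.
by rewrite lerDl sumr_ge0.
Qed.

Lemma inner_bound s i L K : 0 <= s -> (i <= L)%N -> (K <= L.+1)%N ->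
  \sum_(m < K) \sum_(j < 2 ^ m | lam_index m j)
     W s m * (FR L (Dp i) m j ^+ 2 + FI L (Dp i) m j ^+ 2) <= cc s i * Ep i.
Proof.
move=> s0 iL KL.
pose G m := \sum_(j < 2 ^ m | lam_index m j) (FR L (Dp i) m j ^+ 2 + FI L (Dp i) m j ^+ 2).
have G0 m : 0 <= G m by apply: sumr_ge0 => j _; rewrite addr_ge0 ?sqr_ge0.
apply: (le_trans (y := \sum_(m < K) W s i * G m)).
  apply: ler_sum => m _; rewrite /G mulr_sumr; apply: ler_sum => j lj.
  have [mi|im] := leqP m i.
    by rewrite ler_wpM2r ?addr_ge0 ?sqr_ge0 ?W_mono.
  have mL : (m <= L)%N by rewrite -ltnS (leq_trans (ltn_ord m)).
  by have [-> ->] := vanish (Dp_per i) im mL lj; rewrite expr0n /= addr0 !mulr0.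
apply: (le_trans (y := \sum_(m < L.+1) W s i * G m)).
  apply: (sum_ord_le (f := fun m => W s i * G m)) => // m; apply: mulr_ge0 => //; exact: le_trans ler01 (W_ge1 (s:=s) i s0).
have -> : \sum_(m < L.+1) W s i * G m = W s i * \sum_(m < L.+1) G m by rewrite mulr_sumr.
rewrite /G parseval.
rewrite (step_integral_lift (K := i)) //; last by move=> b; rewrite Dp_per.
rewrite /cc -!mulrA ler_wpM2l ?(le_trans ler01) ?W_ge1 //.
by rewrite mulrA energy_bound.
Qed.

Lemma main_fin s n K : 0 <= s ->
  \sum_(m < K) \sum_(j < 2 ^ m | lam_index m j)
     W s m * (fourier_re n (p n) m j ^+ 2 + fourier_im n (p n) m j ^+ 2)
  <= (\sum_(i < n.+1) cc s i) * (\sum_(i < n.+1) Ep i).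
Proof.
move=> s0; set L := maxn n K; set Cn := \sum_(i < n.+1) cc s i.
have Pe : P n = (fun b => \sum_(i < n.+1) Dp i b) by apply: funext => b; apply: P_sum.
have c0 := cc_gt0 _ s0.
have Cn0 : 0 <= Cn by apply: sumr_ge0 => i _; apply: ltW.
pose G i m j := W s m * (FR L (Dp i) m j ^+ 2 + FI L (Dp i) m j ^+ 2).
have step1 (m : 'I_K) j : W s m * (fourier_re n (p n) m j ^+ 2 + fourier_im n (p n) m j ^+ 2)
    <= Cn * \sum_(i < n.+1) (cc s i)^-1 * G i m j.
  have mL : (maxn n m <= L)%N.
    by rewrite geq_max leq_maxl /L (leq_trans (ltnW (ltn_ord m))) ?leq_maxr.
  have [-> ->] := fourier_FR j mL.
  rewrite Pe; have [-> ->] := FR_sum L n.+1 Dp m j.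
  have h1 := wCS n.+1 (fun i => FR L (Dp i) m j) c0.
  have h2 := wCS n.+1 (fun i => FI L (Dp i) m j) c0.
  apply: (le_trans (y := W s m * (Cn * \sum_(i < n.+1)
        (FR L (Dp i) m j ^+ 2 + FI L (Dp i) m j ^+ 2) / cc s i))).
    apply: ler_wpM2l; first exact: le_trans ler01 (W_ge1 (s:=s) m s0).
    have -> : \sum_(i < n.+1) (FR L (Dp i) m j ^+ 2 + FI L (Dp i) m j ^+ 2) / cc s i =
      \sum_(i < n.+1) FR L (Dp i) m j ^+ 2 / cc s i + \sum_(i < n.+1) FI L (Dp i) m j ^+ 2 / cc s i.
      by rewrite -big_split; apply: eq_bigr => i _; rewrite mulrDl.
    by rewrite mulrDr lerD.
  rewrite mulrCA mulr_sumr le_eqVlt; apply/orP; left; apply/eqP.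
  congr (_ * _); apply: eq_bigr => i _; rewrite /G; ring.
apply: (le_trans (y := \sum_(m < K) \sum_(j < 2 ^ m | lam_index m j)
    Cn * \sum_(i < n.+1) (cc s i)^-1 * G i m j)).
  by apply: ler_sum => m _; apply: ler_sum => j _; apply: step1.
rewrite (eq_bigr (fun m : 'I_K => Cn * \sum_(i < n.+1) (cc s i)^-1 *
    \sum_(j < 2 ^ m | lam_index m j) G i m j)); last first.
  move=> m _; rewrite -mulr_sumr exchange_big /=; congr (_ * _).
  by apply: eq_bigr => i _; rewrite mulr_sumr.
rewrite -mulr_sumr ler_wpM2l // exchange_big /=; apply: ler_sum => i _.
rewrite -mulr_sumr ler_pdivrMl // /G.
apply: inner_bound => //.
  by rewrite /L (leq_trans _ (leq_maxl n K)) // -ltnS.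
by rewrite /L (leq_trans (leq_maxr n K)) .
Qed.


Lemma shift_sum (F : nat -> R) a d :
  \sum_(k < d) F (k + a)%N = \sum_(i < a + d) F i - \sum_(i < a) F i.
Proof.
rewrite -!(big_mkord xpredT) (big_cat_nat _ (n := a)) ?leq_addr //= addrC addrK.
by rewrite (big_addn 0 (a + d) a) addKn big_mkord.
Qed.

Lemma bessel1 L (g : nat -> R) m j : (m <= L)%N -> lam_index m j ->
  FR L g m j ^+ 2 + FI L g m j ^+ 2 <= step_integral L (fun b => g b ^+ 2).
Proof.
move=> mL lj; rewrite -parseval.
have mL' : (m < L.+1)%N by [].
have jm : (j < 2 ^ m)%N.
  by case/orP: lj => [/andP[/eqP -> /eqP ->] //|/and3P[_ _ ->]].
rewrite (bigD1 (Ordinal mL')) //= (bigD1 (Ordinal jm)) //=.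
rewrite -addrA lerDl; apply: addr_ge0; apply: sumr_ge0 => i _.
  by rewrite addr_ge0 ?sqr_ge0.
by apply: sumr_ge0 => i' _; rewrite addr_ge0 ?sqr_ge0.
Qed.

Lemma FR_sub L (f g : nat -> R) m j :
  FR L f m j - FR L g m j = FR L (fun b => f b - g b) m j /\
  FI L f m j - FI L g m j = FI L (fun b => f b - g b) m j.
Proof.
rewrite /FR /FI -!step_integralN -!step_integralD.
by split; congr step_integral; apply: funext => b; ring.
Qed.

Lemma L2tail s n d L : 0 <= s -> (n + d <= L)%N ->
  step_integral L (fun b => (P (n + d) b - P n b) ^+ 2) <=
  (\sum_(k < d) cc s (k + n.+1)%N) * (\sum_(k < d) Ep (k + n.+1)%N).
Proof.
move=> s0 ndL.
have c0 : forall k, 0 < cc s (k + n.+1)%N by move=> k; apply: cc_gt0.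
have E b : P (n + d) b - P n b = \sum_(k < d) Dp (k + n.+1)%N b.
  by rewrite (shift_sum (fun i => Dp i b)) !P_sum addSn.
apply: (le_trans (step_integral_le L (g := fun b => (\sum_(k < d) cc s (k + n.+1)%N) *
   \sum_(k < d) Dp (k + n.+1)%N b ^+ 2 / cc s (k + n.+1)%N) _)).
  by move=> b; rewrite E; apply: (wCS d (fun k => Dp (k + n.+1)%N b) c0).
rewrite step_integralZ ler_wpM2l //; first by apply: sumr_ge0 => k _; apply: ltW.
have SI : step_integral L (fun b => \sum_(k < d) Dp (k + n.+1)%N b ^+ 2 / cc s (k + n.+1)%N)
  = \sum_(k < d) step_integral L (fun b => Dp (k + n.+1)%N b ^+ 2 / cc s (k + n.+1)%N).
  exact: (step_integral_sum L d (fun k b => Dp (k + n.+1)%N b ^+ 2 / cc s (k + n.+1)%N)).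
rewrite SI.
apply: ler_sum => k _; set i := (k + n.+1)%N.
have iL : (i <= L)%N by rewrite /i (leq_trans _ ndL) // addnC addSn ltn_add2l.
rewrite (step_integral_lift (K := i)) //; last by move=> b; rewrite Dp_per.
rewrite (_ : (fun b => Dp i b ^+ 2 / cc s i) = (fun b => (cc s i)^-1 * Dp i b ^+ 2)); last first.
  by apply: funext => b; rewrite mulrC.
rewrite step_integralZ.
apply: (le_trans (y := (cc s i)^-1 * ((2 ^ i)%:R^-1 * Mx i * Ep i))).
  apply: ler_wpM2l; [by rewrite invr_ge0 (ltW (c0 k)) | exact: energy_bound].
have W1 := W_ge1 (s := s) i s0.
have W0 : 0 < W s i by apply: lt_le_trans W1.
have M0 := Mx_gt0 i.
have E0 := Ep_ge0 i.
have t0 : 0 < (2 ^ i)%:R :> R by rewrite ltr0n expn_gt0.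
rewrite (_ : (cc s i)^-1 * ((2 ^ i)%:R^-1 * Mx i * Ep i) = Ep i / W s i); last first.
  by rewrite /cc; field; rewrite !gt_eqF.
by rewrite ler_pdivrMr // ler_peMr.
Qed.

Lemma tail_small (u : nat -> R) B : (forall i, 0 <= u i) ->
  (forall N, \sum_(i < N) u i <= B) ->
  forall e, 0 < e -> exists N, forall a d, (N <= a)%N -> \sum_(k < d) u (k + a)%N < e.
Proof.
move=> u0 uB e e0.
pose S n := \sum_(i < n) u i.
have Sh : {homo S : n m / (n <= m)%N >-> n <= m}.
  by move=> n m nm; apply: sum_ord_le.
have Sb : has_ubound (range S) by exists B => _ [n _ <-]; apply: uB.
have Sc : cvgn S := nondecreasing_is_cvgn Sh Sb.
have Sl n : S n <= limn S := nondecreasing_cvgn_le Sh Sc n.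
have : limn S - e / 2 < limn S by rewrite gtrBl divr_gt0.
move=> /(lt_lim Sh Sc) [N _ HN].
exists N => a d Na; rewrite shift_sum.
have := HN a Na; have := Sl (a + d)%N; rewrite /S.
move: (\sum_(i < a + d) u i) (\sum_(i < a) u i) => x y h1 h2.
have : e / 2 < e by rewrite ltr_pdivrMr // ltr_pMr // ltr1n.
lra.
Qed.

Lemma cauchy_seq_cvg (u : nat -> R) :
  (forall e, 0 < e -> exists N, forall n m, (N <= n)%N -> (N <= m)%N -> `|u n - u m| < e) ->
  cvgn u.
Proof.
move=> H; apply/cauchy_cvgP; apply: cauchy_exP => e e0.
have [N HN] := H e e0.
exists (u N); exists N => // n /= Nn.
by rewrite /ball /= HN.
Qed.


Lemma cc_le s i : 0 <= s -> (0 < i)%N ->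
  cc s i <= 2 `^ (2 * s) * (maxres r i / 2 `^ (i%:R * (1 - 2 * s))).
Proof.
case: i => // i s0 _; set t := 2 * s.
have t0 : 0 <= t by rewrite /t mulr_ge0.
rewrite /cc /W /Mx /lam_abs2 -/t.
have -> : (i.+1 == 0)%N = false by [].
set N : R := (2 ^ i.+1)%:R.
have N1 : 1 <= N by rewrite /N ler1n expn_gt0.
have NE : N = 2 `^ (i.+1)%:R by rewrite /N powR_mulrn // natrX.
have h1 : (1 + N) `^ t <= (N * 2) `^ t.
  apply: ge0_ler_powR => //; rewrite ?nnegrE; try lra.
have h2 : (N * 2) `^ t = 2 `^ ((i.+1)%:R * t) * 2 `^ t.
  by rewrite powRM ?NE -?powRrM //; lra.
have h3 : 2 `^ ((i.+1)%:R * (1 - t)) = N / 2 `^ ((i.+1)%:R * t).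
  by rewrite mulrBr mulr1 powRB ?NE //; apply/implyP => _; rewrite pnatr_eq0.
have p1 : 0 < 2 `^ ((i.+1)%:R * t) :> R by apply: powR_gt0.
have p2 : 0 < 2 `^ t :> R by apply: powR_gt0.
have M0 : 0 < maxres r i.+1 by apply: (Mx_gt0 i.+1).
rewrite h3; apply: (le_trans (y := (N * 2) `^ t * N^-1 * maxres r i.+1)).
  by rewrite ler_wpM2r ?(ltW M0) // ler_wpM2r // invr_ge0; lra.
rewrite h2 le_eqVlt; apply/orP; left; apply/eqP.
by field; rewrite !gt_eqF //; lra.
Qed.

Lemma ccB_lemma s Ba : 0 <= s ->
  (forall N, \sum_(1 <= i < N) maxres r i / 2 `^ (i%:R * (1 - 2 * s)) <= Ba) ->
  forall N, \sum_(i < N) cc s i <= 1 + 2 `^ (2 * s) * Ba.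
Proof.
move=> s0 hB N.
have Ba0 : 0 <= Ba by have := hB 0%N; rewrite big_geq.
have pt : 0 <= 2 `^ (2 * s) :> R by apply: powR_ge0.
case: N => [|N]; first by rewrite big_ord0 addr_ge0 // mulr_ge0.
rewrite big_ord_recl /=.
have -> : cc s 0 = 1 by rewrite /cc /W /lam_abs2 /Mx /= addr0 powR1 expn0 invr1 !mulr1.
rewrite lerD2l; apply: (le_trans (y := \sum_(i < N) 2 `^ (2 * s) *
   (maxres r i.+1 / 2 `^ (i.+1%:R * (1 - 2 * s))))).
  by apply: ler_sum => i _; apply: cc_le.
rewrite -mulr_sumr ler_wpM2l //; apply: le_trans (hB N.+1).
by rewrite big_add1 /= big_mkord.
Qed.

Lemma series_bound (a : nat -> R) : (forall n, (1 <= n)%N -> 0 <= a n) ->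
  (\sum_(1 <= n <oo) (a n)%:E < +oo)%E ->
  forall N, \sum_(1 <= i < N) a i <= fine (\sum_(1 <= n <oo) (a n)%:E)%E.
Proof.
move=> a0 afin N.
have ge0 : (0 <= \sum_(1 <= n <oo) (a n)%:E)%E.
  by apply: nneseries_ge0 => n n1 _; rewrite lee_fin a0.
have fn : (\sum_(1 <= n <oo) (a n)%:E)%E \is a fin_num by rewrite ge0_fin_numE.
have := nneseries_lim_ge (u_ := fun n => (a n)%:E) (P := xpredT) (m := 1%N) N.
rewrite sumEFin -(fineK fn) lee_fin; apply => n n1 _; by rewrite lee_fin a0.
Qed.

Lemma sq_lt_norm (x e : R) : 0 < e -> x ^+ 2 < e ^+ 2 -> `|x| < e.
Proof. move=> e0 h; rewrite ltr_norml; apply/andP; split; nra. Qed.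

Lemma prod_lt (X Y e' Hb e : R) : 0 <= X -> X < e' -> 0 <= Y -> Y <= Hb ->
  e' * (Hb + 1) = e -> X * Y < e.
Proof.
move=> X0 Xe Y0 YH <-.
have e'0 : 0 < e' by apply: le_lt_trans Xe.
apply: (le_lt_trans (y := e' * Hb)); first by rewrite ler_pM // ltW.
by rewrite ltr_pM2l // ltrDl.
Qed.

Lemma cvg_sq_comb (u v : nat -> R) (a b w : R) :
  (u n @[n --> \oo] --> a)%classic -> (v n @[n --> \oo] --> b)%classic ->
  ((w * (u n ^+ 2 + v n ^+ 2)) @[n --> \oo] --> w * (a ^+ 2 + b ^+ 2))%classic.
Proof.
move=> ua vb.
apply: (@cvgM _ _ _ _ (fun=> w) (fun n => u n ^+ 2 + v n ^+ 2)); first exact: cvg_cst.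
apply: (@cvgD _ _ _ _ _ (fun n => u n ^+ 2) (fun n => v n ^+ 2)).
  by rewrite expr2; apply: (@cvgM _ _ _ _ u u).
by rewrite expr2; apply: (@cvgM _ _ _ _ v v).
Qed.

Lemma final_p s C2 : 0 <= s -> (forall N, \sum_(i < N) cc s i <= C2) ->
  (H1semi2 r p < +oo)%E ->
  [/\ L2_cauchy p,
      (forall m j : nat, lam_index m j ->
         cvgn (fun n => fourier_re n (p n) m j) /\
         cvgn (fun n => fourier_im n (p n) m j)),
      (Hs_norm2 s (gamma0_re p) (gamma0_im p) < +oo)%E &
      (Hs_norm2 s (gamma0_re p) (gamma0_im p) <= C2%:E * H1norm2 r p)%E].
Proof.
move=> s0 ccB hp.
have E0 n : (1 <= n)%N -> 0 <= edge_energy r p n.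
  by case: n => // n _; apply: (Ep_ge0 n.+1).
have sB := series_bound E0 hp.
set Hs := fine (H1semi2 r p) in sB.
have semi0 : (0 <= H1semi2 r p)%E.
  by apply: nneseries_ge0 => n n1 _; rewrite lee_fin E0.
have fin : H1semi2 r p \is a fin_num by rewrite ge0_fin_numE.
have Hs0 : 0 <= Hs by apply: fine_ge0.
set Hb := p 0 0 ^+ 2 + Hs.
have Hb0 : 0 <= Hb by rewrite addr_ge0 ?sqr_ge0.
have EpB N : \sum_(i < N) Ep i <= Hb.
  case: N => [|N]; first by rewrite big_ord0.
  rewrite big_ord_recl /= lerD2l; apply: le_trans (sB N.+1).
  by rewrite big_add1 /= big_mkord.
have EpT a d : \sum_(k < d) Ep (k + a)%N <= Hb.
  rewrite (shift_sum Ep); apply: le_trans (EpB (a + d)%N).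
  by rewrite lerBlDr lerDl sumr_ge0 // => i _; apply: Ep_ge0.
have cc0 i : 0 <= cc s i by apply: ltW; apply: cc_gt0.
have C20 : 0 <= C2 by have := ccB 0%N; rewrite big_ord0.
have tl := tail_small cc0 ccB.
have Hb1 : 0 < Hb + 1 by rewrite ltr_wpDl.
have ccT a d : 0 <= \sum_(k < d) cc s (k + a)%N by apply: sumr_ge0.
have L2T e : 0 < e -> exists N, forall n d L, (N <= n)%N -> (n + d <= L)%N ->
    step_integral L (fun b => (P (n + d) b - P n b) ^+ 2) < e.
  move=> e0; have e'0 : 0 < e / (Hb + 1) by rewrite divr_gt0.
  have [N HN] := tl _ e'0; exists N => n d L Nn ndL.
  apply: le_lt_trans (L2tail s0 ndL) _.
  apply: (prod_lt (e' := e / (Hb + 1)) (Hb := Hb)) => //.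
  - by apply: HN; apply: leqW.
  - by apply: sumr_ge0 => k _; apply: Ep_ge0.
  - by rewrite divfK // gt_eqF.
have FC m j : lam_index m j -> forall e, 0 < e -> exists N, forall n n',
    (N <= n)%N -> (N <= n')%N ->
    `|fourier_re n (p n) m j - fourier_re n' (p n') m j| < e /\
    `|fourier_im n (p n) m j - fourier_im n' (p n') m j| < e.
  move=> lj e e0; have e20 : 0 < e ^+ 2 by rewrite exprn_gt0.
  have [N HN] := L2T _ e20; exists N => n n' Nn Nn'.
  wlog nn : n n' Nn Nn' / (n <= n')%N.
    move=> H; case: (leqP n n') => [|/ltnW] nn; first exact: H.
    by rewrite distrC [X in _ /\ X < _]distrC; apply: H.
  rewrite -(subnKC nn); set d := (n' - n)%N; set L := maxn (n + d) m.
  have mL1 : (maxn n m <= L)%N.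
    by rewrite geq_max leq_maxr (leq_trans (leq_addr d n)) ?leq_maxl.
  have mL2 : (maxn (n + d) m <= L)%N by [].
  have [r1 i1] := fourier_FR j mL1; have [r2 i2] := fourier_FR j mL2.
  rewrite r1 r2 i1 i2 distrC [X in _ /\ X < _]distrC.
  have [s1 s2] := FR_sub L (P (n + d)) (P n) m j.
  have B := bessel1 (fun b => P (n + d) b - P n b) (leq_maxr (n + d) m) lj.
  have Tt := HN n d L Nn (leq_maxl _ _).
  split; apply: sq_lt_norm => //.
    by rewrite s1; apply: le_lt_trans Tt; apply: le_trans B; rewrite lerDl sqr_ge0.
  by rewrite s2; apply: le_lt_trans Tt; apply: le_trans B; rewrite lerDr sqr_ge0.
have CV m j : lam_index m j -> cvgn (fun n => fourier_re n (p n) m j) /\ cvgn (fun n => fourier_im n (p n) m j).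
  move=> lj; split; apply: cauchy_seq_cvg => e e0.
    by have [N HN] := FC m j lj e e0; exists N => n n' a b; case: (HN n n' a b).
  by have [N HN] := FC m j lj e e0; exists N => n n' a b; case: (HN n n' a b).
have T K : \sum_(m < K) \sum_(j < 2 ^ m | lam_index m j)
    (1 + lam_abs2 R m) `^ (2 * s) * (gamma0_re p m j ^+ 2 + gamma0_im p m j ^+ 2)
    <= C2 * Hb.
  pose f n := \sum_(m < K) \sum_(j < 2 ^ m | lam_index m j)
    W s m * (fourier_re n (p n) m j ^+ 2 + fourier_im n (p n) m j ^+ 2).
  have fB n : f n <= C2 * Hb.
    apply: le_trans (main_fin n K s0) _.
    apply: ler_pM; [by apply: sumr_ge0 | by apply: sumr_ge0 => i _; apply: Ep_ge0 | exact: ccB | exact: EpB].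
  have fc : (f n @[n --> \oo] --> \sum_(m < K) \sum_(j < 2 ^ m | lam_index m j)
      W s m * (gamma0_re p m j ^+ 2 + gamma0_im p m j ^+ 2))%classic.
    apply: cvg_big => //; first exact: add_continuous.
    move=> m _; apply: cvg_big => //; first exact: add_continuous.
    move=> j lj; have [c1 c2] := CV m j lj; exact: cvg_sq_comb c1 c2.
  rewrite -(cvg_lim _ fc) //.
  apply: limr_le; first by apply/cvg_ex; eexists; exact: fc.
  by apply: nearW.
have HsB : (Hs_norm2 s (gamma0_re p) (gamma0_im p) <= (C2 * Hb)%:E)%E.
  rewrite /Hs_norm2; apply: lime_le.
    apply: is_cvg_nneseries => m _ _; rewrite lee_fin; apply: sumr_ge0 => j _.
    by rewrite mulr_ge0 ?powR_ge0 // addr_ge0 ?sqr_ge0.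
  by apply: nearW => K; rewrite sumEFin lee_fin big_mkord T.
split.
- move=> e e0; have [N HN] := L2T e e0; exists N => n m Nn Nm.
  wlog nm : n m Nn Nm / (n <= m)%N.
    move=> H; case: (leqP n m) => [|/ltnW] nm; first exact: H.
    have -> : L2dist2 p n m = L2dist2 p m n.
      rewrite /L2dist2 maxnC; congr step_integral; apply: funext => b.
      by rewrite -sqrrN opprB.
    exact: H.
  rewrite -(subnKC nm) /L2dist2 (maxn_idPr (leq_addr _ _)).
  have := HN n (m - n)%N (n + (m - n))%N Nn (leqnn _).
  by rewrite /P; congr (_ < _); congr step_integral; apply: funext => b; rewrite -sqrrN opprB.
- exact: CV.
- by apply: le_lt_trans HsB _; rewrite ltry.
- by rewrite /H1norm2 -(fineK fin) -EFinD -EFinM.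
Qed.

End SF.

Unset Implicit Arguments.

Theorem proposition3p1 (R : realType) (r : nat -> nat -> R) (s : R)
  (hr : forall n k : nat, (1 <= n)%N -> (k < 2 ^ n)%N -> 0 < r n k)
  (hs : 0 < s)
  (hsum : (\sum_(1 <= n <oo)
             (maxres r n / 2 `^ (n%:R * (1 - 2 * s)))%:E < +oo)%E) :
  exists C : R, 0 < C /\
    forall p : nat -> nat -> R, (H1semi2 r p < +oo)%E ->
      [/\ L2_cauchy p,
          (forall m j : nat, lam_index m j ->
             cvgn (fun n => fourier_re n (p n) m j) /\
             cvgn (fun n => fourier_im n (p n) m j)),
          (Hs_norm2 s (gamma0_re p) (gamma0_im p) < +oo)%E &
          (Hs_norm2 s (gamma0_re p) (gamma0_im p)
             <= (C ^+ 2)%:E * H1norm2 r p)%E].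
Proof.
have s0 : 0 <= s by apply: ltW.
pose a n := maxres r n / 2 `^ (n%:R * (1 - 2 * s)).
have a0 n : (1 <= n)%N -> 0 <= a n.
  move=> n1; rewrite /a divr_ge0 ?powR_ge0 //.
  by have := Mx_gt0 hr n; case: n n1 => // n _ /ltW.
have aB := series_bound (a := a) a0 hsum.
set Ba := fine _ in aB.
have ccB := ccB_lemma hr s0 aB.
have Ba0 : 0 <= Ba by have := aB 0%N; rewrite big_geq.
set C2 := 1 + 2 `^ (2 * s) * Ba in ccB.
have C2pos : 0 < C2 by rewrite /C2 ltr_wpDr // mulr_ge0 ?powR_ge0.
exists (Num.sqrt C2); split; first by rewrite sqrtr_gt0.
move=> p hp; rewrite sqr_sqrtr; last exact: ltW C2pos.
by have := final_p hr s0 ccB hp.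
Qed.
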